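(* Let $G$ be a connected graph with adjacency matrix $A$, $d=A\mathbf 1$, $D=\mathrm{diag}(d)$, $P=D^{-1}A$, let $e=(i,j)$, $i\ne j$, $a_{ij}>0$, be an edge that is not a cut-edge, $v=e_i-e_j$, $\widehat A=A+a_{ij}vv^T$, $\widehat P=D^{-1}\widehat A$ and $c(e)=K(\widehat P)-K(P)$. Define \[ W^{-1}=I-D^{-1/2}AD^{-1/2}+\frac{1}{\|d\|_1}D^{1/2}\mathbf 1\mathbf 1^TD^{1/2},\qquad \widehat W^{-1}=W^{-1}-a_{ij}D^{-1/2}vv^TD^{-1/2} \] (both matrices are invertible). Then \[ c(e)=a_{ij}\,v^TD^{-1/2}W\widehat WD^{-1/2}v, \] and moreover $1-a_{ij}v^TD^{-1/2}WD^{-1/2}v\ne 0$ and $\widehat W=W-\tau a_{ij}WD^{-1/2}vv^TD^{-1/2}W$ with $\tau=-1/(1-a_{ij}v^TD^{-1/2}WD^{-1/2}v)$.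
   Context: Graphs are undirected and possibly weighted on vertex set $\{1,\dots,n\}$, with symmetric nonnegative adjacency matrix $A=(a_{k\ell})$; $d=A\mathbf 1$ (all entries assumed positive); $\|d\|_1=\sum_k d_k$; $D^{\pm1/2}=\mathrm{diag}(d_k^{\pm1/2})$; $e_k$ is the $k$-th column of the identity and $\mathbf 1$ the all-ones vector. For an irreducible row-stochastic matrix $Q$ with stationary vector $\pi$, the Kemeny constant is $K(Q)=\sum_j\pi_j m_{kj}$, where $m_{kj}$ is the expected first passage time from $k$ to $j$ ($m_{kk}=0$), independent of $k$; equivalently $K(Q)=\sum_{\ell=2}^n 1/(1-\lambda_\ell)$, where $1=\lambda_1,\lambda_2,\dots,\lambda_n$ are the eigenvalues of $Q$. The edge $e$ is a cut-edge if the graph obtained by deleting $e$ is disconnected. *)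

(* Defs.v *)
(* Scalars: an arbitrary real closed field R (e.g. the reals);
   eigenvalues are taken in its algebraic closure R[i]. *)
From HB Require Import structures.
From mathcomp Require Import all_boot all_order all_algebra.
From mathcomp Require Import complex.
Set Implicit Arguments. Unset Strict Implicit. Unset Printing Implicit Defensive.
Import Order.TTheory GRing.Theory Num.Theory.
Local Open Scope ring_scope.

Section Defs.
Variable R : rcfType.
Variable n : nat.

Definition cmx (Q : 'M[R]_n) : 'M[R[i]]_n := map_mx (fun x => Complex x 0) Q.

(* the eigenvalues of Q, listed with algebraic multiplicity
   (roots of the characteristic polynomial in R[i]) *)
Definition eigenvalues (Q : 'M[R]_n) : seq R[i] :=
  sval (closed_field_poly_normal (char_poly (cmx Q))).

(* Kemeny constant: K(Q) = sum_{l >= 2} 1/(1 - lambda_l), where lambda_1 = 1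
   is removed (one copy) from the list of eigenvalues. *)
Definition Kemeny (Q : 'M[R]_n) : R[i] :=
  \sum_(z <- rem 1 (eigenvalues Q)) (1 - z)^-1.

Definition ones : 'cV[R]_n := const_mx 1.
Definition degv (A : 'M[R]_n) : 'cV[R]_n := A *m ones.
Definition Dmat (A : 'M[R]_n) : 'M[R]_n := diag_mx (\row_k degv A k 0).
Definition Dinv (A : 'M[R]_n) : 'M[R]_n := diag_mx (\row_k (degv A k 0)^-1).
Definition Dhalf (A : 'M[R]_n) : 'M[R]_n := diag_mx (\row_k Num.sqrt (degv A k 0)).
Definition Dmhalf (A : 'M[R]_n) : 'M[R]_n :=
  diag_mx (\row_k (Num.sqrt (degv A k 0))^-1).
Definition dnorm1 (A : 'M[R]_n) : R := \sum_k degv A k 0.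

Definition adjrel (A : 'M[R]_n) : rel 'I_n := fun k l => 0 < A k l.
Definition connected_graph (A : 'M[R]_n) : Prop :=
  forall k l : 'I_n, connect (adjrel A) k l.

Definition del_edge_rel (A : 'M[R]_n) (i j : 'I_n) : rel 'I_n :=
  fun k l => (0 < A k l) && ~~ (((k == i) && (l == j)) || ((k == j) && (l == i))).
Definition cut_edge (A : 'M[R]_n) (i j : 'I_n) : Prop :=
  ~ (forall k l : 'I_n, connect (del_edge_rel A i j) k l).

Definition evec (i j : 'I_n) : 'cV[R]_n :=
  \col_k ((k == i)%:R - (k == j)%:R).

Definition Winv (A : 'M[R]_n) : 'M[R]_n :=
  1%:M - Dmhalf A *m A *m Dmhalf A
  + (dnorm1 A)^-1 *: (Dhalf A *m ones *m ones^T *m Dhalf A).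
Definition What_inv (A : 'M[R]_n) (i j : 'I_n) : 'M[R]_n :=
  Winv A - A i j *: (Dmhalf A *m evec i j *m (evec i j)^T *m Dmhalf A).

End Defs.

Arguments evec {R n} i j.
Arguments ones {R n}.

(* Main.v *)
Require Import Defs.
From HB Require Import structures.
From mathcomp Require Import all_boot all_order all_algebra.
From mathcomp Require Import complex.
Import Order.TTheory GRing.Theory Num.Theory.
Local Open Scope ring_scope.
From mathcomp Require Import sesquilinear spectral.
From mathcomp Require Import ring.
Set Implicit Arguments. Unset Strict Implicit. Unset Printing Implicit Defensive.

Section Diag.
Variable R : rcfType.
Variable n : nat.
Variable d : 'cV[R]_n.
Hypothesis dpos : forall k, 0 < d k 0.

Definition dmh : 'M[R]_n := diag_mx (\row_k (Num.sqrt (d k 0))^-1).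
Definition dh : 'M[R]_n := diag_mx (\row_k Num.sqrt (d k 0)).
Definition dinv : 'M[R]_n := diag_mx (\row_k (d k 0)^-1).
Definition dmat : 'M[R]_n := diag_mx (\row_k d k 0).
Definition yd : 'cV[R]_n := \col_k Num.sqrt (d k 0).

Lemma sqrtd_neq0 k : Num.sqrt (d k 0) != 0.
Proof. by rewrite sqrtr_eq0 -ltNge; apply: dpos. Qed.

Lemma dmh_dh : dmh *m dh = 1%:M.
Proof.
rewrite /dmh /dh mulmx_diag -diag_const_mx; congr diag_mx.
by apply/rowP => k; rewrite !mxE mulVf // sqrtd_neq0.
Qed.

Lemma dh_dmh : dh *m dmh = 1%:M.
Proof.
rewrite /dmh /dh mulmx_diag -diag_const_mx; congr diag_mx.
by apply/rowP => k; rewrite !mxE mulfV // sqrtd_neq0.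
Qed.

Lemma dmh_dmh : dmh *m dmh = dinv.
Proof.
rewrite /dmh /dinv mulmx_diag; congr diag_mx.
by apply/rowP => k; rewrite !mxE -invfM -expr2 sqr_sqrtr // ltW.
Qed.

Lemma dh_dh : dh *m dh = dmat.
Proof.
rewrite /dh /dmat mulmx_diag; congr diag_mx.
by apply/rowP => k; rewrite !mxE -expr2 sqr_sqrtr // ltW.
Qed.

Lemma dmh_dmat : dmh *m dmat = dh.
Proof. by rewrite -dh_dh mulmxA dmh_dh mul1mx. Qed.

Lemma dh_ones : dh *m ones = yd.
Proof. by apply/colP => k; rewrite /dh mul_diag_mx !mxE mulr1. Qed.

Lemma dmh_d : dmh *m d = yd.
Proof.
apply/colP => k; rewrite /dmh mul_diag_mx !mxE.
have hd := dpos k.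
rewrite -{2}(sqr_sqrtr (ltW hd)) expr2 mulrA mulVf ?mul1r //.
exact: sqrtd_neq0.
Qed.

Lemma yTy : yd^T *m yd = (\sum_k d k 0)%:M.
Proof.
rewrite [LHS]mx11_scalar; congr (_ %:M).
rewrite !mxE; apply: eq_bigr => k _.
by rewrite !mxE -expr2 sqr_sqrtr // ltW.
Qed.

End Diag.

Section Basics.
Variable R : rcfType.
Variable n : nat.
Variable B : 'M[R]_n.
Hypothesis Bsym : B^T = B.
Hypothesis dpos : forall k, 0 < degv B k 0.

Lemma Bsym_e k l : B k l = B l k.
Proof. by move: (congr1 (fun M : 'M[R]_n => M l k) Bsym); rewrite mxE. Qed.

Lemma degvE k : degv B k 0 = \sum_l B k l.
Proof. by rewrite /degv mxE; apply: eq_bigr => l _; rewrite mxE mulr1. Qed.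

Definition Smat := Dmhalf B *m B *m Dmhalf B.
Definition yv : 'cV[R]_n := yd (degv B).

Lemma Smat_tr : Smat^T = Smat.
Proof. by rewrite /Smat !trmx_mul tr_diag_mx Bsym mulmxA. Qed.

Lemma Sy : Smat *m yv = yv.
Proof.
rewrite /Smat /yv -[Dmhalf B]/(dmh (degv B)).
rewrite -!mulmxA -(dh_ones (degv B)) (mulmxA (dmh _) (dh _)) dmh_dh // mul1mx.
by rewrite -[B *m ones]/(degv B) dmh_d // dh_ones.
Qed.

Lemma yTy' : yv^T *m yv = (dnorm1 B)%:M.
Proof. exact: yTy. Qed.

Lemma WinvE : Winv B = 1%:M - Smat + (dnorm1 B)^-1 *: (yv *m yv^T).
Proof.
rewrite /Winv /Smat /yv -(dh_ones (degv B)) trmx_mul tr_diag_mx !mulmxA.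
by [].
Qed.

End Basics.

Section Unit.
Variable R : rcfType.
Variable n : nat.
Variable B : 'M[R]_n.
Hypothesis Bsym : B^T = B.
Hypothesis dpos : forall k, 0 < degv B k 0.
Hypothesis Bnn : forall k l, 0 <= B k l.
Hypothesis conn : connected_graph B.

Lemma dnorm_pos (k0 : 'I_n) : 0 < dnorm1 B.
Proof.
rewrite /dnorm1 (bigD1 k0) //=; apply: ltr_wpDr; last exact: dpos.
by apply: sumr_ge0 => k _; apply: ltW.
Qed.

Lemma Winv_y (k0 : 'I_n) : Winv B *m yv B = yv B.
Proof.
rewrite WinvE mulmxDl mulmxBl mul1mx Sy // subrr add0r -scalemxAl -mulmxA.
by rewrite yTy' // mul_mx_scalar scalerA mulVf ?scale1r // gt_eqF ?(dnorm_pos k0).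
Qed.

Lemma edge_eq (z : 'I_n -> R) :
  (forall l, \sum_k B k l * (z l - z k) = 0) ->
  forall k l, 0 < B k l -> z k = z l.
Proof.
move=> H.
have E1 : \sum_k \sum_l B k l * (z k - z l) * z k = 0.
  apply: big1 => k _; rewrite -mulr_suml.
  rewrite (eq_bigr (fun l => B l k * (z k - z l))) ?H ?mul0r // => l _.
  by rewrite Bsym_e.
have E2 : \sum_k \sum_l B k l * (z k - z l) * z l = 0.
  rewrite exchange_big /=; apply: big1 => l _; rewrite -mulr_suml.
  rewrite -[X in X * _]opprK -sumrN.
  rewrite (eq_bigr (fun k => B k l * (z l - z k))) ?H ?oppr0 ?mul0r // => k _.
  by rewrite -mulrN opprB.
have Hs : \sum_k \sum_l B k l * (z k - z l) ^+ 2 = 0.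
  rewrite (eq_bigr (fun k => \sum_l B k l * (z k - z l) * z k
                              - \sum_l B k l * (z k - z l) * z l)).
    by rewrite sumrB E1 E2 subrr.
  move=> k _; rewrite -sumrB; apply: eq_bigr => l _.
  by rewrite expr2 -!mulrA -mulrBr -mulrBr.
have Hnn : forall k l, 0 <= B k l * (z k - z l) ^+ 2.
  by move=> k l; apply: mulr_ge0 => //; apply: sqr_ge0.
have Hk : forall k, \sum_l B k l * (z k - z l) ^+ 2 = 0.
  move=> k; apply: (psumr_eq0P (P := predT) (F := fun k => \sum_l B k l * (z k - z l) ^+ 2)) => //.
  by move=> k' _; apply: sumr_ge0 => l' _.
move=> k l Bkl.
have Hkl : B k l * (z k - z l) ^+ 2 = 0.
  by apply: (psumr_eq0P (P := predT) (F := fun l => B k l * (z k - z l) ^+ 2)) => //.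
move: Hkl => /eqP; rewrite mulf_eq0 gt_eqF //= sqrf_eq0 subr_eq0.
by move/eqP.
Qed.

Lemma conn_eq (z : 'I_n -> R) :
  (forall k l, 0 < B k l -> z k = z l) -> forall k l, z k = z l.
Proof.
move=> H k l; move: (conn k l) => /connectP [p pth ->] {l}.
elim: p k pth => [|x p IH] k //= /andP [e pth].
rewrite -(IH x pth); exact: H.
Qed.

Lemma Winv_unit (k0 : 'I_n) : Winv B \in unitmx.
Proof.
rewrite unitmxE unitfE; apply/negP => /det0P [r rnz rW]; move/eqP: rnz; apply.
have ry : r *m yv B = 0 by rewrite -(Winv_y k0) mulmxA rW mul0mx.
have rS : r *m Smat B = r.
  move: rW; rewrite WinvE mulmxDr mulmxBr mulmx1 -scalemxAr (mulmxA r (yv B)) ry mul0mx scaler0 addr0.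
  by move/eqP; rewrite subr_eq0 => /eqP <-.
have hD : Dmhalf B = dmh (degv B) by [].
have hH : Dhalf B = dh (degv B) by [].
set z := r *m Dmhalf B.
have zB : z *m B = r *m Dhalf B.
  by rewrite -[in RHS]rS /z /Smat hD hH -!mulmxA dmh_dh // mulmx1.
have zD : z *m Dmat B = r *m Dhalf B.
  by rewrite /z hD hH -mulmxA -[Dmat B]/(dmat (degv B)) dmh_dmat.
have Hl : forall l, \sum_k B k l * (z 0 l - z 0 k) = 0.
  move=> l.
  have e1 : \sum_k z 0 k * B k l = z 0 l * degv B l 0.
    have e2 := congr1 (fun M : 'M[R]_(1,n) => M 0 l) zB.
    have e3 := congr1 (fun M : 'M[R]_(1,n) => M 0 l) zD.
    simpl in e2, e3; rewrite mxE in e2.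
    by rewrite e2 -e3 /Dmat mul_mx_diag !mxE.
  rewrite (eq_bigr (fun k => z 0 l * B k l - z 0 k * B k l)); last first.
    by move=> k _; rewrite mulrBr ![B k l * _]mulrC.
  rewrite sumrB e1 degvE -mulr_sumr (eq_bigr (fun k => B l k)) ?subrr // => k _.
  exact: Bsym_e.
have zc := conn_eq (edge_eq Hl).
set t := z 0 k0.
have rE : r = z *m Dhalf B by rewrite /z hD hH -mulmxA dmh_dh // mulmx1.
have rk : forall k, r 0 k = t * Num.sqrt (degv B k 0).
  by move=> k; rewrite rE /Dhalf mul_mx_diag mxE (zc k k0); congr (_ * _); rewrite mxE.
have : (r *m yv B) 0 0 = t * dnorm1 B.
  rewrite mxE /dnorm1 mulr_sumr; apply: eq_bigr => k _.
  by rewrite rk /yv /yd [X in _ * X]mxE -mulrA -expr2 sqr_sqrtr // ltW ?dpos.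
rewrite ry mxE => /esym /eqP; rewrite mulf_eq0 (gt_eqF (dnorm_pos k0)) ?orbF => /eqP t0.
by apply/rowP => k; rewrite rk t0 mul0r mxE.
Qed.

End Unit.

Section DetLemma.
Variable T : comNzRingType.
Variable m : nat.

Lemma det_rank1 (N : 'M[T]_m) (p q : 'cV[T]_m) (mu : T) :
  N *m p = mu *: p -> q^T *m p = 1%:M ->
  \det (N + p *m q^T) * mu = (1 + mu) * \det N.
Proof.
move=> Np qp.
have h1 : block_mx N p (- q^T) (1%:M : 'M_1) *m block_mx 1%:M p 0 ((- mu)%:M : 'M_1)
   = block_mx N 0 (- q^T) ((- (1 + mu))%:M : 'M_1).
  rewrite mulmx_block !mulmx1 !mulmx0 !addr0 Np mul_mx_scalar scaleNr subrr.
  rewrite mulNmx qp mul1mx; congr block_mx.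
  by apply/matrixP => a b; rewrite !ord1 !mxE /= !mulr1n opprD.
have h2 : block_mx 1%:M (- p) 0 (1%:M : 'M_1) *m block_mx N p (- q^T) (1%:M : 'M_1)
   = block_mx (N + p *m q^T) 0 (- q^T) (1%:M : 'M_1).
  rewrite mulmx_block !mul1mx !mul0mx !add0r mulmxN mulNmx opprK.
  by rewrite mulmx1 subrr.
have d1 := congr1 determinant h1.
have d2 := congr1 determinant h2.
rewrite det_mulmx det_lblock det_ublock det1 !mul1r !det_scalar1 in d1.
rewrite det_mulmx det_ublock det_lblock !det1 !mul1r mulr1 in d2.
rewrite d2 in d1.
have : \det (N + p *m q^T) * (- mu) = \det N * (- (1 + mu)) by rewrite d1.
by rewrite mulrN mulrN => /oppr_inj ->; rewrite mulrC.
Qed.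

End DetLemma.

Section CharSim.
Variable F : comNzRingType.
Variable m : nat.

Lemma char_poly_sim (U V X : 'M[F]_m) :
  U *m V = 1%:M -> char_poly (U *m X *m V) = char_poly X.
Proof.
move=> UV.
have UV' : map_mx (@polyC F) U *m map_mx (@polyC F) V = 1%:M.
  by rewrite -map_mxM UV map_mx1.
rewrite /char_poly.
have -> : char_poly_mx (U *m X *m V) =
   map_mx (@polyC F) U *m char_poly_mx X *m map_mx (@polyC F) V.
  rewrite /char_poly_mx mulmxBr mulmxBl !map_mxM; congr (_ - _).
  by rewrite mul_mx_scalar -scalemxAl UV' -mul_scalar_mx mulmx1.
by rewrite !det_mulmx mulrAC -det_mulmx UV' det1 mul1r.
Qed.

End CharSim.

Lemma invmx_right (F : fieldType) m (A X : 'M[F]_m) : A *m X = 1%:M -> invmx A = X.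
Proof.
move=> h; have [hA _] := mulmx1_unit h.
by rewrite -[invmx A]mulmx1 -h mulmxA (mulVmx hA) mul1mx.
Qed.

Lemma diag_invK (F : fieldType) m (d : 'rV[F]_m) : (forall k, d 0 k != 0) ->
  diag_mx d *m diag_mx (\row_k (d 0 k)^-1) = 1%:M.
Proof.
move=> h; rewrite mulmx_diag -diag_const_mx; congr diag_mx.
by apply/rowP => k; rewrite !mxE mulfV.
Qed.

Section SM.
Variable F : fieldType.
Variable m : nat.

Lemma unit_ker (A : 'M[F]_m) (y : 'cV_m) : A \in unitmx -> A *m y = 0 -> y = 0.
Proof. by move=> hA hy; rewrite -(mul1mx y) -(mulVmx hA) -mulmxA hy mulmx0. Qed.

Lemma sherman (W0 : 'M[F]_m) (x : 'cV_m) (a : F) :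
  W0 \in unitmx -> (W0 - a *: (x *m x^T)) \in unitmx -> x != 0 ->
  let W := invmx W0 in let W' := invmx (W0 - a *: (x *m x^T)) in
  let s := 1 - a * (x^T *m W *m x) 0 0 in
  [/\ s != 0, W' = W - (- s^-1 * a) *: (W *m x *m x^T *m W) &
      \tr W' - \tr W = a * (x^T *m W *m W' *m x) 0 0].
Proof.
move=> h0 h1 xn0 W W' s.
set u := W *m x. set ut := x^T *m W.
set k := (x^T *m W *m x) 0 0.
have hk : ut *m x = k%:M by rewrite /ut [LHS]mx11_scalar.
have hu : W0 *m u = x by rewrite /u mulmxA mulmxV // mul1mx.
have hut : x^T *m u = k%:M by rewrite /u mulmxA hk.
have e1 : (W0 - a *: (x *m x^T)) *m u = s *: x.
  by rewrite mulmxBl hu -scalemxAl -mulmxA hut mul_mx_scalar scalerA scalerBl scale1r.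
have sn0 : s != 0.
  apply/negP => /eqP s0; move: e1; rewrite s0 scale0r => /(unit_ker h1) u0.
  by move: xn0; rewrite -hu u0 mulmx0 eqxx.
set b := s^-1 * a.
have hZ : (W0 - a *: (x *m x^T)) *m (W + b *: (u *m ut)) = 1%:M.
  rewrite mulmxDr -scalemxAr mulmxA e1 mulmxBl (mulmxV h0) -scalemxAl -mulmxA.
  rewrite -/ut -scalemxAl scalerA.
  have -> : b * s = a by rewrite /b mulrAC mulVf // mul1r.
  by rewrite subrK.
have eW' : W' = W + b *: (u *m ut) by rewrite /W' (invmx_right hZ).
split => //.
  by rewrite eW' /u /ut !mulmxA mulNr scaleNr opprK.
rewrite eW' mxtraceD mxtraceZ addrAC subrr add0r mxtrace_mulC trace_mx11.
rewrite -/ut mulmxDr mulmxDl -!scalemxAr -!scalemxAl mulmxA -/ut.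
rewrite -[ut *m W *m x]mulmxA -/u (mulmxA ut u ut) -(mulmxA (ut *m u)) hk mul_mx_scalar.
rewrite !mxE.
set t := (ut *m u) 0 0.
move: sn0; rewrite /b /s -/k => sn0.
by field.
Qed.

End SM.

Section Kem.
Variable R : rcfType.
Variable n : nat.

Lemma cmxE (Q : 'M[R]_n) : cmx Q = map_mx (real_complex R) Q.
Proof. by []. Qed.

Lemma mxtrace_map (Q : 'M[R]_n) : \tr (cmx Q) = (\tr Q)%:C%C.
Proof.
rewrite cmxE /mxtrace rmorph_sum; apply: eq_bigr => k _; by rewrite mxE.
Qed.

Lemma eigE (Q : 'M[R]_n) :
  char_poly (cmx Q) = \prod_(z <- eigenvalues Q) ('X - z%:P).
Proof.
rewrite /eigenvalues; case: closed_field_poly_normal => r /= hr.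
by rewrite {1}hr (monicP (char_poly_monic _)) scale1r.
Qed.

Lemma conj_real (x : R) : (x%:C%C)^* = x%:C%C.
Proof. by apply: conj_Creal; rewrite complex_real. Qed.

End Kem.

Section Kem2.
Variable R : rcfType.
Variable n : nat.
Variable B : 'M[R]_n.
Hypothesis Bsym : B^T = B.
Hypothesis dpos : forall k, 0 < degv B k 0.
Hypothesis hunit : Winv B \in unitmx.
Variable k0 : 'I_n.

Lemma Kemeny_W : Kemeny (Dinv B *m B) = Complex (\tr (invmx (Winv B)) - 1) 0.
Proof.
have hD : Dmhalf B = dmh (degv B) by [].
have hH : Dhalf B = dh (degv B) by [].
set S := Smat B. set y := yv B. set c := (dnorm1 B)^-1.
set M := S - c *: (y *m y^T).
have WM : Winv B = 1%:M - M.
  by rewrite WinvE /M -/S -/y -/c opprB addrCA addrC.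
have cP : char_poly (Dinv B *m B) = char_poly S.
  have -> : Dinv B *m B = Dmhalf B *m S *m Dhalf B.
    rewrite /S /Smat hD hH !mulmxA dmh_dmh // -[Dinv B]/(dinv (degv B)).
    by rewrite -!mulmxA dmh_dh // mulmx1.
  by rewrite char_poly_sim // hD hH dmh_dh.
have cM : char_poly M * ('X - 1) = 'X * char_poly S.
  have cy : c *: (y^T *m y) = 1%:M.
    by rewrite yTy' // -/c scale_scalar_mx mulVf // gt_eqF // (dnorm_pos dpos k0).
  have tZ : (c *: y)^T = c *: y^T by apply/matrixP => a b; rewrite !mxE.
  have := @det_rank1 _ _ (char_poly_mx S) (map_mx polyC y) (map_mx polyC (c *: y)) ('X - 1).
  have e : char_poly_mx M = char_poly_mx S + map_mx polyC y *m (map_mx polyC (c *: y))^T.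
    rewrite /char_poly_mx /M map_trmx -map_mxM tZ -scalemxAr.
    by rewrite map_mxB opprB addrCA addrC.

  move=> h; rewrite /char_poly e h.
  - by rewrite addrC subrK.
    rewrite /char_poly_mx mulmxBl mul_scalar_mx -map_mxM Sy //.
    by rewrite scalerBl scale1r.
  by rewrite map_trmx -map_mxM tZ -scalemxAl cy map_mx1.
set Mc := cmx M.
have cMc : char_poly Mc * ('X - 1) = 'X * char_poly (cmx S).
  have eX : ('X - 1 : {poly R[i]}) = map_poly (real_complex R) ('X - 1%:P).
    by rewrite map_polyXsubC rmorph1.
  have eX2 : ('X : {poly R[i]}) = map_poly (real_complex R) 'X by rewrite map_polyX.
  rewrite /Mc !cmxE -!map_char_poly eX {1}eX2 -!rmorphM.
  by rewrite polyC1 cM.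
set zs := eigenvalues (Dinv B *m B).
have hz : char_poly (cmx S) = \prod_(z <- zs) ('X - z%:P).
  by rewrite -eigE !cmxE -!map_char_poly cP.
have Mtr : M^T = M.
  rewrite /M linearB /= Smat_tr // linearZ /= trmx_mul trmxK.
  by [].
have eMc : (Mc ^t* )%sesqui = Mc.
  rewrite /Mc cmxE map_trmx Mtr -map_mx_comp; apply: eq_map_mx => x /=.
  exact: conj_real.
have hMc : Mc \is normalmx by rewrite qualifE eMc.
have /orthomx_spectralP hsp := hMc.
set U := spectralmx Mc in hsp *. set w := spectral_diag Mc in hsp *.
have hU : U \in unitmx := spectral_unit Mc.
set ws := [seq w 0 k | k <- index_enum 'I_n].
have cMw : char_poly Mc = \prod_(k < n) ('X - (w 0 k)%:P).
  rewrite {1}hsp char_poly_sim ?(mulVmx hU) // char_poly_trig ?diag_mx_is_trig //.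
  by apply: eq_bigr => k _; rewrite mxE eqxx mulr1n.
have hperm : perm_eq (1 :: ws) (0 :: zs).
  apply: prod_XsubC_eq; rewrite !big_cons big_map -cMw -hz polyC0 subr0 -cMc.
  by rewrite polyC1 mulrC.
have hW : 1%:M - Mc \in unitmx.
  have : cmx (Winv B) \in unitmx by rewrite cmxE map_unitmx.
  by rewrite WM cmxE map_mxB map_mx1.
have eD : 1%:M - Mc = invmx U *m diag_mx (\row_k (1 - w 0 k)) *m U.
  have -> : diag_mx (\row_k (1 - w 0 k)) = 1%:M - diag_mx w.
    by apply/matrixP => a b; rewrite !mxE mulrnBl.
  by rewrite mulmxBr mulmxBl mulmx1 (mulVmx hU) -hsp.
have hw : forall k, 1 - w 0 k != 0.
  move=> k; move: hW; rewrite eD !unitmx_mul => /andP[/andP[_ hd] _]; move: hd.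
  rewrite unitmxE det_diag unitfE => /prodf_neq0 /(_ k isT).
  by rewrite mxE.
have h1ws : 1 \notin ws.
  by apply/mapP => -[k _ hk]; move: (hw k); rewrite -hk subrr eqxx.
have z1 : 1 \in zs.
  have := perm_mem hperm 1; rewrite !in_cons eqxx oner_eq0 /=.
  by move=> <-.
have hws : perm_eq ws (0 :: rem 1 zs).
  rewrite -(perm_cons 1); apply: (perm_trans hperm).
  have h := perm_to_rem z1.
  apply: (@perm_trans _ (0 :: 1 :: rem 1 zs)); first by rewrite perm_cons.
  by apply/permP => p /=; rewrite addnCA.
have hsum : \sum_(x <- ws) (1 - x)^-1 = 1 + Kemeny (Dinv B *m B).
  by rewrite (perm_big _ hws) big_cons subr0 invr1.
have hinv : invmx (1%:M - Mc) = invmx U *m diag_mx (\row_k (1 - w 0 k)^-1) *m U.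
  have hp : (1%:M - Mc) *m (invmx U *m diag_mx (\row_k (1 - w 0 k)^-1) *m U) = 1%:M.
    rewrite eD !mulmxA -(mulmxA _ U) (mulmxV hU) mulmx1.
    rewrite -(mulmxA (invmx U) (diag_mx _) (diag_mx _)).
    have hd : forall k, (\row_k (1 - w 0 k)) 0 k != 0 by move=> k; rewrite mxE hw.
    have := diag_invK hd.
    have -> : \row_k ((\row_k (1 - w 0 k)) 0 k)^-1 = \row_k (1 - w 0 k)^-1.
      by apply/rowP => k; rewrite !mxE.
    by move=> ->; rewrite mulmx1 (mulVmx hU).
  exact: invmx_right hp.
have htr : \tr (invmx (1%:M - Mc)) = \sum_(x <- ws) (1 - x)^-1.
  rewrite hinv mxtrace_mulC mulmxA (mulmxV hU) mul1mx mxtrace_diag big_map.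
  by apply: eq_bigr => k _; rewrite mxE.
have h : (\tr (invmx (Winv B)))%:C%C = 1 + Kemeny (Dinv B *m B).
  by rewrite -mxtrace_map cmxE map_invmx WM map_mxB map_mx1 -cmxE htr hsum.
have -> : Kemeny (Dinv B *m B) = (\tr (invmx (Winv B)))%:C%C - 1.
  by rewrite h addrC addKr.
by rewrite -(rmorph1 (real_complex R)) -rmorphB.
Qed.

End Kem2.

Section Evec.
Variable R : rcfType.
Variable n : nat.
Variables i j : 'I_n.
Hypothesis ij : i != j.

Lemma evecE k : (evec i j : 'cV[R]_n) k 0 = (k == i)%:R - (k == j)%:R.
Proof. by rewrite mxE. Qed.

Lemma vvE k l : ((evec i j : 'cV[R]_n) *m (evec i j)^T) k l
   = (evec i j : 'cV[R]_n) k 0 * (evec i j : 'cV[R]_n) l 0.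
Proof. by rewrite !mxE big_ord1 !mxE. Qed.

Lemma excl (k : 'I_n) : ~~ ((k == i) && (k == j)).
Proof.
apply/negP => /andP [/eqP -> /eqP h]; by move: ij; rewrite h eqxx.
Qed.

Lemma vv_pair k l : ((k == i) && (l == j)) || ((k == j) && (l == i)) ->
  (evec i j : 'cV[R]_n) k 0 * (evec i j : 'cV[R]_n) l 0 = -1.
Proof.
rewrite !evecE; move: (excl k) (excl l).
case: (k == i); case: (k == j); case: (l == i); case: (l == j) => //= _ _ _;
  rewrite ?subr0 ?sub0r ?mul1r ?mulr1 ?mulN1r ?mulrN1 //.
Qed.

Lemma vv_nonneg k l : ~~ (((k == i) && (l == j)) || ((k == j) && (l == i))) ->
  0 <= (evec i j : 'cV[R]_n) k 0 * (evec i j : 'cV[R]_n) l 0.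
Proof.
rewrite !evecE; move: (excl k) (excl l).
case: (k == i); case: (k == j); case: (l == i); case: (l == j) => //= _ _ _;
  rewrite ?subr0 ?sub0r ?mul1r ?mulr1 ?mulN1r ?mulrN1 ?mul0r ?mulr0 ?opprK ?oppr0 ?ler01 ?lexx //.
Qed.

Lemma sum_ind (p : 'I_n) : \sum_k ((k == p)%:R : R) = 1.
Proof.
rewrite (bigD1 p) //= eqxx big1 ?addr0 // => k /negbTE ->; exact: mulr0n.
Qed.

Lemma vT_ones : (evec i j : 'cV[R]_n)^T *m ones = 0.
Proof.
rewrite [LHS]mx11_scalar mxE.
rewrite (eq_bigr (fun k => (k == i)%:R - (k == j)%:R)) => [|k _]; last first.
  by rewrite !mxE mulr1.
by rewrite sumrB !sum_ind subrr; apply/matrixP => a b; rewrite !mxE mul0rn.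
Qed.

End Evec.

Section Main.
Variable R : rcfType.
Variable n : nat.
Variable A : 'M[R]_n.
Variables i j : 'I_n.
Hypothesis Asym : A^T = A.
Hypothesis Ann : forall k l, 0 <= A k l.
Hypothesis dpos : forall k, 0 < degv A k 0.
Hypothesis conn : connected_graph A.
Hypothesis ij : i != j.
Hypothesis aij : 0 < A i j.
Hypothesis ncut : ~ cut_edge A i j.

Local Notation v := (evec i j : 'cV[R]_n).
Local Notation a := (A i j).
Definition Ahat := A + a *: (v *m v^T).

Lemma AhatE k l : Ahat k l = A k l + a * (v k 0 * v l 0).
Proof. by rewrite /Ahat !mxE big_ord1 !mxE. Qed.

Lemma Ahat_sym : Ahat^T = Ahat.
Proof.
apply/matrixP => k l; rewrite mxE !AhatE (Bsym_e Asym k l).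
by rewrite [v l 0 * _]mulrC.
Qed.

Lemma Ahat_nn k l : 0 <= Ahat k l.
Proof.
rewrite AhatE.
case: (boolP (((k == i) && (l == j)) || ((k == j) && (l == i)))) => h.
  rewrite vv_pair // mulrN1.
  case/orP: h => /andP [/eqP -> /eqP ->]; first by rewrite subrr.
  by rewrite (Bsym_e Asym j i) subrr.
apply: addr_ge0 => //; apply: mulr_ge0; [exact: ltW | exact: vv_nonneg].
Qed.

Lemma degv_hat : degv Ahat = degv A.
Proof.
by rewrite /degv /Ahat mulmxDl -scalemxAl -mulmxA vT_ones mulmx0 scaler0 addr0.
Qed.

Lemma dpos_hat k : 0 < degv Ahat k 0.
Proof. by rewrite degv_hat. Qed.

Lemma conn_hat : connected_graph Ahat.
Proof.
have H : forall k l, connect (del_edge_rel A i j) k l.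
  case: (boolP [forall k, [forall l, connect (del_edge_rel A i j) k l]]).
    by move=> /forallP H k l; move: (H k) => /forallP.
  move=> /forallPn [k /forallPn [l /negP hkl]]; exfalso; apply: ncut => H.
  by apply: hkl; apply: H.
move=> k l; apply: (connect_sub _ (H k l)) => x y /andP [hxy hn].
apply: connect1; rewrite /adjrel AhatE.
apply: (lt_le_trans hxy); rewrite lerDl.
by apply: mulr_ge0; [exact: ltW | exact: vv_nonneg].
Qed.

End Main.

Theorem theorem9 (R : rcfType) (n : nat) (A : 'M[R]_n) (i j : 'I_n) :
  A^T = A ->
  (forall k l, 0 <= A k l) ->
  (forall k, 0 < degv A k 0) ->
  connected_graph A ->
  i != j -> 0 < A i j -> ~ cut_edge A i j ->
  let v := evec i j in
  let a := A i j in
  let P := Dinv A *m A in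
  let Ahat := A + a *: (v *m v^T) in
  let Phat := Dinv A *m Ahat in
  let W := invmx (Winv A) in
  let What := invmx (What_inv A i j) in
  let s := 1 - a * (v^T *m Dmhalf A *m W *m Dmhalf A *m v) 0 0 in
  let tau := - s^-1 in
  [/\ Winv A \in unitmx, What_inv A i j \in unitmx,
      Kemeny Phat - Kemeny P
        = Complex (a * (v^T *m Dmhalf A *m W *m What *m Dmhalf A *m v) 0 0) 0,
      s != 0 &
      What = W - (tau * a) *: (W *m Dmhalf A *m v *m v^T *m Dmhalf A *m W)].
Proof.
move=> Asym Ann dpos conn ij aij ncut v a P Ah Phat W What s tau.
have hAh : Ah = Ahat A i j by [].
have hdeg : degv Ah = degv A by rewrite hAh; apply: degv_hat.
have hWh : What_inv A i j = Winv Ah.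
  rewrite /What_inv /Winv /Dmhalf /Dhalf /dnorm1 hdeg /Ah.
  rewrite mulmxDr mulmxDl -scalemxAr -scalemxAl !mulmxA opprD addrA.
  rewrite [LHS]addrAC. reflexivity.
have hu1 : Winv A \in unitmx := Winv_unit Asym dpos Ann conn i.
have hu2 : What_inv A i j \in unitmx.
  rewrite hWh hAh; apply: (Winv_unit _ _ _ _ i).
  - exact: Ahat_sym.
  - by move=> k; rewrite -hAh hdeg.
  - exact: Ahat_nn.
  - exact: conn_hat.
have hP : Kemeny P = Complex (\tr W - 1) 0 := Kemeny_W Asym dpos hu1 i.
have hPh : Kemeny Phat = Complex (\tr What - 1) 0.
  have -> : Phat = Dinv Ah *m Ah by rewrite /Phat /Dinv hdeg.
  rewrite /What hWh; apply: Kemeny_W.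
  - by rewrite hAh; apply: Ahat_sym.
  - by move=> k; rewrite hdeg.
  - by rewrite -hWh.
  - exact: i.
set x := Dmhalf A *m v.
have hxT : x^T = v^T *m Dmhalf A by rewrite /x trmx_mul tr_diag_mx.
have hxx : What_inv A i j = Winv A - a *: (x *m x^T).
  by rewrite /What_inv hxT /x !mulmxA.
have xn0 : x != 0.
  apply/negP => /eqP x0.
  have : v = 0.
    rewrite -(mul1mx v) -[1%:M](dh_dmh dpos) -mulmxA.
    by rewrite -[dmh (degv A)]/(Dmhalf A) -/x x0 mulmx0.
  move/matrixP => /(_ i 0); rewrite !mxE eqxx (negbTE ij) subr0.
  by move/eqP; rewrite oner_eq0.
have hu2' : Winv A - a *: (x *m x^T) \in unitmx by rewrite -hxx.
have [sn0 eW dtr] := sherman hu1 hu2' xn0.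
rewrite -/W -hxx -/What hxT !mulmxA in sn0 eW dtr.
split => //.
rewrite hPh hP.
rewrite -dtr.
change (((\tr What - 1)%:C - (\tr W - 1)%:C)%C = ((\tr What - \tr W)%:C)%C).
by rewrite -rmorphB opprB addrA subrK.
Qed.
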